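(* Let $l>0$, $\Omega=(0,\pi)\times(-l,l)$, $\sigma\in(0,1)$, $\Omega_O\subset\overline\Omega$ nonempty closed and symmetric with respect to the $x$-axis ($(x,y)\in\Omega_O\iff(x,-y)\in\Omega_O$). Let $f\in(C^0(\overline\Omega))'$, $\gamma_\pm>0$, $\psi_-\in O_-(\gamma_-)$, $\psi_+\in O_+(\gamma_+)$, and let $u=u_{f,\psi_-,\psi_+}$. Then: (i) if $\psi_-$ and $\psi_+$ are even in $y$ and $f^o=0$, then $u^o\equiv0$ in $\overline\Omega$; (ii) if $\psi_-=-\psi_+=\psi$ with $\psi$ even in $y$ and $f^e=0$, then $u^e\equiv0$ in $\overline\Omega$.
   Context: $H^2_*(\Omega):=\{v\in H^2(\Omega): v=0\text{ on }\{0,\pi\}\times(-l,l)\}$ with scalar product $(u,v)_{H^2_*(\Omega)}:=\int_\Omega\big(\Delta u\Delta v+(1-\sigma)(2u_{xy}v_{xy}-u_{xx}v_{yy}-u_{yy}v_{xx})\big)$; elements identified with continuous functions on $\overline\Omega$. $(C^0(\overline\Omega))'$: dual of $C^0(\overline\Omega)$ with pairing $\langle f,u\rangle$. $O_+(\gamma):=\{\psi\in C^0(\Omega_O):\psi\ge\gamma\}$, $O_-(\gamma):=\{\psi\in C^0(\Omega_O):\psi\le-\gamma\}$. $H^2_{*,\psi_-,\psi_+}(\Omega):=\{v\in H^2_*(\Omega):\psi_-\le v\le\psi_+\text{ on }\Omega_O\}$; $u_{f,\psi_-,\psi_+}$ is the unique $u\in H^2_{*,\psi_-,\psi_+}(\Omega)$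 with $(u,\varphi-u)_{H^2_*(\Omega)}\ge\langle f,\varphi-u\rangle$ for all $\varphi\in H^2_{*,\psi_-,\psi_+}(\Omega)$. For $u\in C^0(\overline\Omega)$: $u^e(x,y)=\frac{u(x,y)+u(x,-y)}2$, $u^o(x,y)=\frac{u(x,y)-u(x,-y)}2$. For $f\in(C^0(\overline\Omega))'$: $\langle f^e,u\rangle:=\langle f,u^e\rangle$ and $\langle f^o,u\rangle:=\langle f,u^o\rangle$. *)

(* Defs.v *)
From HB Require Import structures.
From mathcomp Require Import all_boot all_order all_algebra.
From mathcomp Require Import all_classical all_reals all_analysis.
Import Order.TTheory GRing.Theory Num.Theory.
Import numFieldNormedType.Exports.
Local Open Scope classical_set_scope.
Local Open Scope ring_scope.

Set Implicit Arguments.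
Unset Strict Implicit.
Unset Printing Implicit Defensive.

Definition Om (R : realType) (l : R) : set (R * R) :=
  [set p | 0 < p.1 < pi /\ - l < p.2 < l].
Definition Omc (R : realType) (l : R) : set (R * R) :=
  [set p | 0 <= p.1 <= pi /\ - l <= p.2 <= l].

Definition mu2 (R : realType) := ((@lebesgue_measure R) \x (@lebesgue_measure R))%E.

(* partial derivatives: false = d/dx, true = d/dy *)
Definition dir (R : realType) (b : bool) : R * R := if b then (0, 1) else (1, 0).
Definition pD (R : realType) (b : bool) (f : R * R -> R) : R * R -> R :=
  fun p => 'D_(dir R b) f p.
Definition iterD (R : realType) (s : seq bool) (f : R * R -> R) : R * R -> R :=
  foldr (fun b g => pD b g) f s.

Definition test_fun (R : realType) (l : R) (phi : R * R -> R) : Prop :=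
  (forall (s : seq bool) (b : bool) (p : R * R), derivable (iterD s phi) p (dir R b)) /\
  (forall s : seq bool, continuous (iterD s phi)) /\
  (exists K : set (R * R), compact K /\ K `<=` Om l /\ (forall p, ~ K p -> phi p = 0)).

Definition L2 (R : realType) (l : R) (g : R * R -> R) : Prop :=
  measurable_fun (Om l) g /\ (@mu2 R).-integrable (Om l) (fun p => (g p ^+ 2)%:E).

Definition weak_deriv (R : realType) (l : R) (v : R * R -> R) (a : seq bool)
    (g : R * R -> R) : Prop :=
  forall phi, test_fun l phi ->
    \int[@mu2 R]_(p in Om l) (v p * iterD a phi p)
    = (-1) ^+ size a * \int[@mu2 R]_(p in Om l) (g p * phi p).

(* H^2(Omega), elements identified with continuous functions on the closure *)
Definition H2 (R : realType) (l : R) (v : R * R -> R) : Prop :=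
  {within Omc l, continuous v} /\ L2 l v /\
  (forall a : seq bool, (size a <= 2)%N -> exists g, L2 l g /\ weak_deriv l v a g).

Definition H2s (R : realType) (l : R) (v : R * R -> R) : Prop :=
  H2 l v /\ (forall y : R, - l < y < l -> v (0, y) = 0 /\ v (pi, y) = 0).

Definition D2wit (R : realType) (l : R) (v : R * R -> R)
    (w : (R * R -> R) * (R * R -> R) * (R * R -> R)) : Prop :=
  L2 l w.1.1 /\ L2 l w.1.2 /\ L2 l w.2 /\
  weak_deriv l v [:: false; false] w.1.1 /\
  weak_deriv l v [:: false; true] w.1.2 /\
  weak_deriv l v [:: true; true] w.2.

Definition H2form (R : realType) (l sigma : R)
    (wu wv : (R * R -> R) * (R * R -> R) * (R * R -> R)) : R :=
  \int[@mu2 R]_(p in Om l)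
    ((wu.1.1 p + wu.2 p) * (wv.1.1 p + wv.2 p)
     + (1 - sigma) * (2 * wu.1.2 p * wv.1.2 p - wu.1.1 p * wv.2 p - wu.2 p * wv.1.1 p)).

Definition wsub (R : realType) (a b : (R * R -> R) * (R * R -> R) * (R * R -> R)) :=
  ((fun p => a.1.1 p - b.1.1 p, fun p => a.1.2 p - b.1.2 p), fun p => a.2 p - b.2 p).

Definition dualC0 (R : realType) (l : R) (f : (R * R -> R) -> R) : Prop :=
  (forall (u v : R * R -> R) (a : R),
      {within Omc l, continuous u} -> {within Omc l, continuous v} ->
      f (fun p => a * u p + v p) = a * f u + f v) /\
  (exists C : R, forall (u : R * R -> R) (M : R),
      {within Omc l, continuous u} -> (forall p, Omc l p -> `|u p| <= M) ->
      `|f u| <= C * M).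

Definition Oplus (R : realType) (OmO : set (R * R)) (gamma : R) (psi : R * R -> R) :=
  {within OmO, continuous psi} /\ (forall p, OmO p -> gamma <= psi p).
Definition Ominus (R : realType) (OmO : set (R * R)) (gamma : R) (psi : R * R -> R) :=
  {within OmO, continuous psi} /\ (forall p, OmO p -> psi p <= - gamma).

Definition Kset (R : realType) (l : R) (OmO : set (R * R)) (psim psip : R * R -> R)
    (v : R * R -> R) : Prop :=
  H2s l v /\ (forall p, OmO p -> psim p <= v p <= psip p).

Definition VIsol (R : realType) (l sigma : R) (OmO : set (R * R))
    (f : (R * R -> R) -> R) (psim psip : R * R -> R) (u : R * R -> R) : Prop :=
  Kset l OmO psim psip u /\
  forall wu, D2wit l u wu ->
  forall phi, Kset l OmO psim psip phi ->
  forall wphi, D2wit l phi wphi ->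
    f (fun p => phi p - u p) <= H2form l sigma wu (wsub wphi wu).

(* u = u_{f,psi_-,psi_+}: THE unique solution of the variational inequality
   (uniqueness as elements of H^2_*, i.e. as continuous functions on the closure) *)
Definition is_u_f (R : realType) (l sigma : R) (OmO : set (R * R))
    (f : (R * R -> R) -> R) (psim psip : R * R -> R) (u : R * R -> R) : Prop :=
  VIsol l sigma OmO f psim psip u /\
  (forall w, VIsol l sigma OmO f psim psip w -> forall p, Omc l p -> w p = u p).

Definition refl (R : realType) (u : R * R -> R) : R * R -> R := fun p => u (p.1, - p.2).
Definition evenp (R : realType) (u : R * R -> R) : R * R -> R :=
  fun p => (u p + u (p.1, - p.2)) / 2.
Definition oddp (R : realType) (u : R * R -> R) : R * R -> R :=
  fun p => (u p - u (p.1, - p.2)) / 2.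

Definition fodd_zero (R : realType) (l : R) (f : (R * R -> R) -> R) : Prop :=
  forall u, {within Omc l, continuous u} -> f (oddp u) = 0.
Definition feven_zero (R : realType) (l : R) (f : (R * R -> R) -> R) : Prop :=
  forall u, {within Omc l, continuous u} -> f (evenp u) = 0.

Definition even_on (R : realType) (OmO : set (R * R)) (psi : R * R -> R) : Prop :=
  forall p, OmO p -> psi (p.1, - p.2) = psi p.

(* Main.v *)
Require Import Defs.
From HB Require Import structures.
From mathcomp Require Import all_boot all_order all_algebra.
From mathcomp Require Import all_classical all_reals all_analysis.
From mathcomp Require Import measurable_realfun.
From mathcomp Require Import ring lra.
Import Order.TTheory GRing.Theory Num.Theory.
Import numFieldNormedType.Exports.
Local Open Scope classical_set_scope.
Local Open Scope ring_scope.
Section P1.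
Variable R : realType.
Definition T1 := (measurable_structure_g_sigma_algebraType__canonical__measurable_structure_Measurable
            (T:=lebesgue_stieltjes_measure_ocitv_type__canonical__classical_sets_Pointed
                  R) (R.-ocitv).-measurable).
Local Notation P2 := (T1 * T1)%type.

Definition rf (p : R * R) : R * R := (p.1, - p.2).

Definition rfT : P2 -> P2 := rf.

Lemma rfK p : rf (rf p) = p.
Proof. by case: p => x y; rewrite /rf /= opprK. Qed.

Lemma mrf : measurable_fun [set: P2] (rf : P2 -> P2).
Proof.
apply: measurable_fun_pair; first exact: measurable_fst.
apply: measurableT_comp; first exact: measurable_realfun.oppr_measurable.
exact: measurable_snd.
Qed.

Lemma OmE (l : R) : Om l = (`]0, pi[ `*` `](- l), l[)%classic.
Proof.
apply/seteqP; split => -[x y] /=; rewrite /Om /= !in_itv /=; by [].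
Qed.

Lemma mOm (l : R) : measurable (Om l : set P2).
Proof. by rewrite OmE; apply: measurableX; exact: measurable_itv. Qed.

Lemma rf_Om (l : R) : rf @^-1` Om l = Om l.
Proof.
apply/seteqP; split => -[x y]; rewrite /Om /rf /=.
  by move=> [-> /andP[h1 h2]]; split=> //; apply/andP; split; rewrite -ltrN2 ?opprK.
by move=> [-> /andP[h1 h2]]; split=> //; apply/andP; split; rewrite ltrNl ?opprK // ltrNr.
Qed.

Lemma push_mu2 (X : set P2) : measurable X ->
  pushforward (@mu2 R) (rf : P2 -> P2) X = (@mu2 R) X.
Proof.
move=> mX; apply/esym.
refine (@product_measure_unique _ _ _ _ _ _ _ (pushforward (@mu2 R) (rf : P2 -> P2)) _ X mX).
move=> A B mA mB.
rewrite /pushforward; cbv beta.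
have E : (rf : P2 -> P2) @^-1` (A `*` B) = A `*` ((-%R) @^-1` B).
  by apply/seteqP; split => -[x y].
transitivity ((@mu2 R) (A `*` ((-%R) @^-1` B))); first exact: (f_equal (@mu2 R) E).
rewrite /mu2 product_measure1E //; last first.
  by rewrite -[X in measurable X]setTI; apply: (@measurable_realfun.oppr_measurable R setT).
congr (_ * _)%E.
exact: (@lebesgue_measureN R B mB).
Unshelve. all: exact: mrf.
Qed.
End P1.
Arguments rf_Om {R}. Arguments mOm {R}. Arguments mrf {R}. Arguments push_mu2 {R}.
Arguments rfK {R}. Arguments rfT {R}. Arguments OmE {R}.
Section P2.
Variable R : realType.
Local Notation P2 := (R * R)%type.
Local Notation rf := (@rf R).
Local Open Scope ereal_scope.

Lemma meas_rf (l : R) d (U : measurableType d) (G : P2 -> U) :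
  measurable_fun (Om l) G -> measurable_fun (Om l) (fun p => G (rf p)).
Proof.
move=> mG _ B mB.
have -> : Om l `&` (fun p => G (rf p)) @^-1` B = (rf : P2 -> P2) @^-1` (Om l `&` G @^-1` B).
  rewrite preimage_setI -/(rf @^-1` Om l) (rf_Om l); apply/seteqP; split => p //=.
rewrite -[X in measurable X]setTI; apply: (mrf (measurableT)).
exact: mG (mOm l) _ mB.
Qed.

Lemma int_rf_ge0 (l : R) (F : P2 -> \bar R) : measurable_fun (Om l) F ->
  (forall p, Om l p -> 0 <= F p) ->
  \int[@mu2 R]_(p in Om l) F (rf p) = \int[@mu2 R]_(p in Om l) F p.
Proof.
move=> mF F0.
have -> : \int[@mu2 R]_(p in Om l) F (rf p) = \int[@mu2 R]_(p in rfT @^-1` Om l) (F \o rfT) p.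
  by rewrite /rfT (rf_Om l).
have mF' : measurable_fun (Om l : set (T1 R * T1 R)) F by exact: mF.
rewrite -(@ge0_integral_pushforward _ _ _ _ R rfT mrf (@mu2 R) (Om l) F (mOm l) mF'); last first.
  by move=> y /[!inE]; exact: F0.
apply: (eq_measure_integral (@mu2 R)); last by move=> mf A mA _; exact: (push_mu2 A mA).
exact: mrf.
Qed.

Lemma int_rf (l : R) (F : P2 -> \bar R) : measurable_fun (Om l) F ->
  \int[@mu2 R]_(p in Om l) F (rf p) = \int[@mu2 R]_(p in Om l) F p.
Proof.
move=> mF.
rewrite [LHS]integralE [RHS]integralE.
have -> : (fun p => F (rf p))^\+ = (F^\+ \o rf) by exact: funepos_comp.
have -> : (fun p => F (rf p))^\- = (F^\- \o rf) by exact: funeneg_comp.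
congr (_ - _); apply: int_rf_ge0.
- exact: measurable_funepos.
- by move=> p _; exact: funepos_ge0.
- exact: measurable_funeneg.
- by move=> p _; exact: funeneg_ge0.
Qed.

Lemma Rint_rf (l : R) (G : P2 -> R) : measurable_fun (Om l) G ->
  Rintegral (@mu2 R) (Om l) (fun p => G (rf p)) = Rintegral (@mu2 R) (Om l) G.
Proof.
move=> mG; rewrite /Rintegral; congr fine.
apply: (@int_rf l (fun p => (G p)%:E)).
exact/measurable_EFinP.
Qed.

Lemma integrable_rf (l : R) (F : P2 -> \bar R) :
  (@mu2 R).-integrable (Om l) F -> (@mu2 R).-integrable (Om l) (fun p => F (rf p)).
Proof.
move=> /integrableP [mF iF]; apply/integrableP; split.
  exact: meas_rf.
rewrite (@int_rf_ge0 l (fun p => `|F p|)) //.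
exact: measurableT_comp.
Qed.
End P2.
Arguments meas_rf {R}. Arguments int_rf_ge0 {R}. Arguments int_rf {R}. Arguments Rint_rf {R}. Arguments integrable_rf {R}.
Section P3.
Variable R : realType.

Lemma rat_between (x y : R) : x < y -> exists q : rat, x < ratr q < y.
Proof. by move=> /rat_in_itvoo [q]; rewrite in_itv /=; exists q. Qed.

Lemma open_meas2 (U : set (R * R)) : open U -> measurable U.
Proof.
move=> oU.
pose box (a b c d : rat) : set (R * R) :=
  (`]ratr a, ratr b[ `*` `]ratr c, ratr d[)%classic.
have -> : U = \bigcup_a \bigcup_b \bigcup_c \bigcup_d
    (if `[< box a b c d `<=` U >] then box a b c d else set0).
  apply/seteqP; split => [p Up|p]; last first.
    move=> [a _ [b _ [c _ [d _]]]].
    by case: ifPn => [/asboolP H /H|].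
  have /nbhs_ballP [e /= e0 H] := oU p Up.
  have [a /andP[a1 a2]] : exists q : rat, p.1 - e < ratr q < p.1 by apply: rat_between; lra.
  have [b /andP[b1 b2]] : exists q : rat, p.1 < ratr q < p.1 + e by apply: rat_between; lra.
  have [c /andP[c1 c2]] : exists q : rat, p.2 - e < ratr q < p.2 by apply: rat_between; lra.
  have [d /andP[d1 d2]] : exists q : rat, p.2 < ratr q < p.2 + e by apply: rat_between; lra.
  have hb : box a b c d `<=` U.
    move=> q; rewrite /box /= !in_itv /= => -[/andP[q1 q2] /andP[q3 q4]].
    apply: H; split; rewrite /ball /=.
      by rewrite ltr_norml; apply/andP; split; lra.
    by rewrite ltr_norml; apply/andP; split; lra.
  exists a => //; exists b => //; exists c => //; exists d => //.
  rewrite (asboolT hb) /box /= !in_itv /=.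
  by split; apply/andP; split.
do 4 (apply: bigcupT_measurable_rat => ?).
case: ifPn => _ //.
by apply: measurableX; exact: measurable_itv.
Qed.

Lemma cont_meas2 (g : R * R -> R) (D : set (R * R)) : continuous g ->
  measurable_fun D g.
Proof.
move=> cg; apply: measurable_funTS.
apply: (measurability _ (RGenOpens.measurableE R)) => _ [_ [a [b ->]] <-].
rewrite setTI; apply: open_meas2.
move/continuousP: cg; apply; exact: interval_open.
Qed.
End P3.
Arguments rat_between {R}. Arguments open_meas2 {R}. Arguments cont_meas2 {R}.
Section P4.
Variable R : realType.
Local Notation rf := (@rf R).

Lemma dopp (x : R) : 'D_1 (-%R : R -> R) x = -1.
Proof.
have -> : (-%R : R -> R) = - (@id R) by [].
rewrite deriveN; last exact: derivable_id.
by rewrite derive_id.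
Qed.

Lemma dopp_derivable (x v : R) : derivable (-%R : R -> R) x v.
Proof.
have -> : (-%R : R -> R) = - (@id R) by [].
apply: derivableN; exact: derivable_id.
Qed.

Lemma deriveE1 (f : R * R -> R) x v :
  'D_v f x = 'D_1 (fun h : R => f (h *: v + x)) 0.
Proof.
rewrite /derive.
suff -> : (fun h : R => h^-1 *: ((f \o shift x) (h *: v) - f x)) =
  (fun h : R => h^-1 *: (((fun h : R => f (h *: v + x)) \o shift 0) (h *: 1) - f (0 *: v + x))) by [].
apply/funext => h /=.
by rewrite addr0 scale0r add0r [_%:A]mulr1.
Qed.

Lemma derive_negv (f : R * R -> R) x v : derivable f x v ->
  derivable f x (- v) /\ 'D_(- v) f x = - 'D_v f x.
Proof.
move=> df.
pose F := fun h : R => f (h *: v + x).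
have dF : derivable F 0 1 by move/derivable1P: df.
have E : (fun h : R => f (h *: - v + x)) = F \o -%R.
  by apply/funext => h; rewrite /F /= scalerN scaleNr.
have dF' : derivable F (- 0) 1 by rewrite oppr0.
split.
  apply/derivable1P; rewrite E; apply/derivable1_diffP.
  apply: differentiable_comp; last exact/derivable1_diffP.
  apply/derivable1_diffP; exact (dopp_derivable 0 1).
rewrite !deriveE1 -/F E -!derive1E derive1_comp; [ | exact (dopp_derivable _ _) | exact dF'].
rewrite oppr0 -[RHS]mulrN1; congr (_ * _); rewrite derive1E; exact (dopp 0).
Qed.

Lemma rf_lin (h : R) (v p : R * R) : rf (h *: v + p) = h *: rf v + rf p.
Proof.
case: v => a b; case: p => c d; rewrite /rf /=.
apply: injective_projections => //=.
by rewrite opprD -scalerN.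
Qed.

Lemma derive_rf (f : R * R -> R) (p v : R * R) :
  'D_v (fun q => f (rf q)) p = 'D_(rf v) f (rf p) /\
  (derivable (fun q => f (rf q)) p v <-> derivable f (rf p) (rf v)).
Proof.
have E : (fun h : R => h^-1 *: (((fun q => f (rf q)) \o shift p) (h *: v) - f (rf p)))
       = (fun h : R => h^-1 *: ((f \o shift (rf p)) (h *: rf v) - f (rf p))).
  by apply/funext => h /=; rewrite rf_lin.
by rewrite /derive /derivable E.
Qed.
End P4.
Arguments dopp {R}. Arguments dopp_derivable {R}. Arguments deriveE1 {R}.
Arguments derive_negv {R f x v}. Arguments rf_lin {R}. Arguments derive_rf {R}.
Section P5.
Variable R : realType.
Local Notation rf := (@rf R).

Lemma rf_cont : continuous rf.
Proof.
move=> x.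
apply: (@cvg_pair _ _ _ (nbhs x) (nbhs x.1) (nbhs (- x.2))).
  exact: cvg_fst.
apply: cvgN; exact: cvg_snd.
Qed.

Definition sgn1 (b : bool) : R := if b then -1 else 1.
Definition sgnb (s : seq bool) : R := (-1) ^+ count id s.

Lemma sgnb_cons b s : sgnb (b :: s) = sgn1 b * sgnb s.
Proof. by rewrite /sgnb /= exprD; case: b; rewrite /= ?expr1 ?expr0. Qed.

Lemma rf_dir b : rf (dir R b) = if b then - dir R b else dir R b.
Proof.
case: b; rewrite /rf /dir /=; apply: injective_projections => //=; by rewrite ?oppr0.
Qed.

Lemma D_refl (G : R * R -> R) (c : R) p b : derivable G (rf p) (dir R b) ->
  derivable (fun q => c * G (rf q)) p (dir R b) /\
  'D_(dir R b) (fun q => c * G (rf q)) p = c * sgn1 b * 'D_(dir R b) G (rf p).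
Proof.
move=> dG.
have [E1 E2] := derive_rf G p (dir R b).
have [k1 k2] : derivable (fun q => G (rf q)) p (dir R b) /\
   'D_(dir R b) (fun q => G (rf q)) p = sgn1 b * 'D_(dir R b) G (rf p).
  rewrite E1 E2 rf_dir; clear E1 E2; case: b dG => /= dG.
    by have [h1 h2] := derive_negv dG; rewrite h2 mulN1r.
  by rewrite mul1r.
split.
  exact (@derivableZ _ _ _ _ c _ _ k1).
rewrite -mulrA -k2.
exact (deriveZ c k1).
Qed.
End P5.
Arguments rf_cont {R}. Arguments sgn1 {R}. Arguments sgnb {R}. Arguments sgnb_cons {R}.
Arguments rf_dir {R}. Arguments D_refl {R}.
Section P6.
Variable R : realType.
Local Notation rf := (@rf R).

Lemma cont_crf (G : R * R -> R) (c : R) : continuous G ->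
  continuous (fun q => c * G (rf q)).
Proof.
move=> cG x.
have h1 : {for x, continuous (cst c : R * R -> R)} by exact: cst_continuous.
have h2 : {for x, continuous (G \o rf)}.
  apply: continuous_comp; [exact: rf_cont | exact: cG].
exact (@continuousM _ _ (cst c) (G \o rf) x h1 h2).
Qed.

Lemma iterD_rf (phi : R * R -> R) :
  (forall s b (p : R * R), derivable (Defs.iterD s phi) p (dir R b)) ->
  forall s, Defs.iterD s (fun q => phi (rf q)) = fun p => sgnb s * Defs.iterD s phi (rf p).
Proof.
move=> Hd; elim => [|b s IH].
  by apply/funext => p /=; rewrite /sgnb /= expr0 mul1r.
apply/funext => p /=; rewrite IH /pD.
have [_ ->] := D_refl _ (sgnb s) _ b (Hd s b (rf p)).
by rewrite sgnb_cons [sgn1 b * _]mulrC.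
Qed.

Lemma test_rf (l : R) (phi : R * R -> R) : test_fun l phi -> test_fun l (fun q => phi (rf q)).
Proof.
move=> [Hd [Hc [K [cK [KO Kz]]]]].
split.
  move=> s b p; rewrite (iterD_rf _ Hd).
  exact: (D_refl _ (sgnb s) _ b (Hd s b (rf p))).1.
split.
  move=> s; rewrite (iterD_rf _ Hd); exact: cont_crf.
exists (rf @` K); split.
  apply: continuous_compact => //; apply: continuous_subspaceT; exact: rf_cont.
split.
  move=> _ [q Kq <-]; have := KO q Kq.
  by rewrite -[X in X q -> _](rf_Om l).
move=> p Kp; apply: Kz => Krp; apply: Kp.
by exists (rf p) => //; rewrite rfK.
Qed.
End P6.
Arguments cont_crf {R}. Arguments iterD_rf {R}. Arguments test_rf {R}.
Section P7.
Variable R : realType.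
Local Notation rf := (@rf R).
Local Notation mu := (@mu2 R).

Lemma fineBsym (x y : \bar R) : (0 <= x)%E -> (0 <= y)%E ->
  fine (y - x)%E = - fine (x - y)%E.
Proof.
case: x => [x| |] //; case: y => [y| |] //= _ _; rewrite ?oppr0 //.
by rewrite opprB.
Qed.

Lemma RintN (D : set (R * R)) (H : R * R -> R) :
  Rintegral mu D (fun p => - H p) = - Rintegral mu D H.
Proof.
rewrite /Rintegral.
rewrite [X in fine X = _]integralE [X in _ = - fine X]integralE.
have -> : (fun p => (- H p)%:E) = (\- (fun p => (H p)%:E))%E.
  by apply/funext => p; rewrite EFinN.
rewrite funeposN funenegN.
apply: fineBsym; apply: integral_ge0 => p _.
  exact: funepos_ge0.
exact: funeneg_ge0.
Qed.

Lemma Rint_sign (D : set (R * R)) (n : nat) (H : R * R -> R) :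
  Rintegral mu D (fun p => (-1) ^+ n * H p) = (-1) ^+ n * Rintegral mu D H.
Proof.
rewrite -signr_odd; case: (odd n); rewrite /= ?expr1 ?expr0.
  have -> : (fun p => -1 * H p) = (fun p => - H p) by apply/funext => p; rewrite mulN1r.
  by rewrite RintN mulN1r.
have -> : (fun p => 1 * H p) = H by apply/funext => p; rewrite mul1r.
by rewrite mul1r.
Qed.
End P7.
Arguments RintN {R}. Arguments Rint_sign {R}.
Section P8.
Variable R : realType.
Local Notation rf := (@rf R).
Local Notation mu := (@mu2 R).

Lemma sgnb_sq (a : seq bool) : sgnb a * sgnb a = 1 :> R.
Proof. by rewrite /sgnb -exprD -signr_odd addnn odd_double expr0. Qed.

Lemma wd_rf (l : R) (v : R * R -> R) (a : seq bool) (g : R * R -> R) (n : nat) :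
  measurable_fun (Om l) v -> measurable_fun (Om l) g -> weak_deriv l v a g ->
  weak_deriv l (fun p => (-1) ^+ n * v (rf p)) a (fun p => (-1) ^+ n * sgnb a * g (rf p)).
Proof.
move=> mv mg W phi tphi.
pose psi := fun q => phi (rf q).
have tpsi : test_fun l psi := test_rf l phi tphi.
have [Hd [Hc _]] := tphi.
have [_ [Hc' _]] := tpsi.
have IE := iterD_rf phi Hd a.
have E p : Defs.iterD a phi p = sgnb a * Defs.iterD a psi (rf p).
  by rewrite /psi IE rfK mulrA sgnb_sq mul1r.
have mI : measurable_fun (Om l) (Defs.iterD a psi) := cont_meas2 _ _ (Hc' a).
have mpsi : measurable_fun (Om l) psi := cont_meas2 _ _ (Hc' [::]).
transitivity (Rintegral mu (Om l) (fun q => (-1) ^+ (n + count id a) * (v q * Defs.iterD a psi q))).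
  have -> : (fun p => (-1) ^+ n * v (rf p) * Defs.iterD a phi p) =
      (fun p => (fun q => (-1) ^+ (n + count id a) * (v q * Defs.iterD a psi q)) (rf p)).
    by apply/funext => p; rewrite E exprD /sgnb; ring.
  apply: Rint_rf.
  apply: measurable_funM; first exact: measurable_cst.
  exact: measurable_funM.
rewrite Rint_sign (W psi tpsi).
have -> : Rintegral mu (Om l) (fun p => (-1) ^+ n * sgnb a * g (rf p) * phi p) =
    Rintegral mu (Om l) (fun q => (-1) ^+ (n + count id a) * (g q * psi q)).
  transitivity (Rintegral mu (Om l)
      (fun p => (fun q => (-1) ^+ (n + count id a) * (g q * psi q)) (rf p))).
    congr (Rintegral _ _ _).
    by apply/funext => p; rewrite /psi rfK exprD /sgnb; ring.
  apply: Rint_rf.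
  apply: measurable_funM; first exact: measurable_cst.
  exact: measurable_funM.
rewrite Rint_sign; ring.
Qed.
End P8.
Arguments sgnb_sq {R}. Arguments wd_rf {R}.
Section P9.
Variable R : realType.
Local Notation rf := (@rf R).

Lemma Omc_rf (l : R) p : Omc l p -> Omc l (rf p).
Proof.
case: p => x y; rewrite /Omc /rf /= => -[h /andP[h1 h2]]; split => //.
by apply/andP; split; lra.
Qed.

Lemma within_lin (A : set (R * R)) (u v : R * R -> R) (a : R) :
  {within A, continuous u} -> {within A, continuous v} ->
  {within A, continuous (fun p => a * u p + v p)}.
Proof.
move=> cu cv x.
have h1 : {for x, continuous ((cst a : subspace A -> R) \* (u : subspace A -> R))}.
  apply: continuousM; [exact: cst_continuous | exact: cu].
exact (@continuousD _ _ _ ((cst a : subspace A -> R) \* (u : subspace A -> R)) (v : subspace A -> R) x h1 (cv x)).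
Qed.

Lemma within_rf (l : R) (v : R * R -> R) :
  {within Omc l, continuous v} -> {within Omc l, continuous (fun p => v (rf p))}.
Proof.
move=> /subspace_continuousP cv; apply/subspace_continuousP => x Ax.
have h := cv (rf x) (Omc_rf l x Ax).
apply: (@cvg_comp _ _ _ rf v (within (Omc l) (nbhs x)) (within (Omc l) (nbhs (rf x)))); last exact: h.
move=> S /=; rewrite /within /= => HS.
have := rf_cont x _ HS; rewrite /= => H2.
change (nbhs x (fun y => Omc l y -> S (rf y))).
have H2' : nbhs x (rf @^-1` [set t | Omc l t -> S t]) := H2.
refine (@filterS _ _ _ _ _ _ H2') => y H3 Ay; apply: H3; exact: Omc_rf.
Qed.

Lemma within_crf (l : R) (v : R * R -> R) (c : R) :
  {within Omc l, continuous v} -> {within Omc l, continuous (fun p => c * v (rf p))}.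
Proof.
move=> cv.
rewrite (_ : (fun p => c * v (rf p)) = (fun p => c * (fun q => v (rf q)) p + (cst 0 : R * R -> R) p)); last first.
  by apply/funext => p; rewrite addr0.
apply: (within_lin _ _ _ c (within_rf l v cv)).
apply: continuous_subspaceT; exact: cst_continuous.
Qed.
End P9.
Arguments Omc_rf {R}. Arguments within_lin {R}. Arguments within_rf {R}. Arguments within_crf {R}.
Section P10.
Variable R : realType.
Local Notation rf := (@rf R).
Local Notation mu := (@mu2 R).
Local Notation trip := ((R * R -> R) * (R * R -> R) * (R * R -> R))%type.

Definition Tf (n : nat) (v : R * R -> R) : R * R -> R := fun p => (-1) ^+ n * v (rf p).
Definition Tw (n : nat) (w : trip) : trip := ((Tf n w.1.1, Tf n.+1 w.1.2), Tf n w.2).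

Lemma sgn_sq n : (-1) ^+ n * (-1) ^+ n = 1 :> R.
Proof. by rewrite -exprD -signr_odd addnn odd_double expr0. Qed.

Lemma TfK n v : Tf n (Tf n v) = v.
Proof. by apply/funext => p; rewrite /Tf rfK mulrA sgn_sq mul1r. Qed.

Lemma L2_rf l v n : L2 l v -> L2 l (Tf n v).
Proof.
move=> [mv iv]; split.
  apply: measurable_funM; first exact: measurable_cst.
  exact: meas_rf.
have -> : (fun p => ((Tf n v p) ^+ 2)%:E) = (fun p => (fun q => (v q ^+ 2)%:E) (rf p)).
  apply/funext => p; rewrite /Tf exprMn -exprM mulnC exprM expr2 mulN1r opprK expr1n mul1r //.
exact (integrable_rf l (fun q => (v q ^+ 2)%:E) iv).
Qed.

Lemma wd_rf' l v a g n m : measurable_fun (Om l) v -> measurable_fun (Om l) g ->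
  (-1) ^+ n * sgnb a = (-1) ^+ m :> R ->
  weak_deriv l v a g -> weak_deriv l (Tf n v) a (Tf m g).
Proof.
move=> mv mg E W.
have := wd_rf l v a g n mv mg W.
by rewrite /Tf E.
Qed.

Lemma H2_rf l v n : H2 l v -> H2 l (Tf n v).
Proof.
move=> [cv [Lv D]]; split; first exact: within_crf.
split; first exact: L2_rf.
move=> a sa; have [g [Lg W]] := D a sa.
exists (Tf (n + count id a) g); split; first exact: L2_rf.
apply: wd_rf' => //; [exact: Lv.1 | exact: Lg.1 | by rewrite exprD].
Qed.

Lemma H2s_rf l v n : H2s l v -> H2s l (Tf n v).
Proof.
move=> [Hv Hb]; split; first exact: H2_rf.
move=> y /andP[y1 y2].
have [h1 h2] : v (0, - y) = 0 /\ v (pi, - y) = 0.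
  by apply: Hb; apply/andP; split; lra.
by rewrite /Tf /rf /= h1 h2 mulr0.
Qed.

Lemma D2wit_rf l v w n : L2 l v -> D2wit l v w -> D2wit l (Tf n v) (Tw n w).
Proof.
move=> [mv _] [L11 [L12 [L22 [W11 [W12 W22]]]]].
rewrite /Tw /=.
split; first exact: L2_rf.
split; first exact: L2_rf.
split; first exact: L2_rf.
split.
  apply: wd_rf' => //; [exact: L11.1 | by rewrite /sgnb /= expr0 mulr1].
split.
  apply: wd_rf' => //; [exact: L12.1 | by rewrite /sgnb /= expr1 exprS mulrC].
apply: wd_rf' => //; [exact: L22.1 | by rewrite /sgnb /= expr2 mulN1r opprK mulr1].
Qed.

Lemma H2form_rf l sigma n (wu wv : trip) :
  L2 l wu.1.1 -> L2 l wu.1.2 -> L2 l wu.2 ->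
  L2 l wv.1.1 -> L2 l wv.1.2 -> L2 l wv.2 ->
  H2form l sigma (Tw n wu) (wsub (Tw n wv) (Tw n wu)) = H2form l sigma wu (wsub wv wu).
Proof.
move=> [m1 _] [m2 _] [m3 _] [m4 _] [m5 _] [m6 _].
rewrite /H2form -[in RHS](Rint_rf l); last first.
  rewrite /wsub /=.
  repeat first [apply: measurable_funB | apply: measurable_funD | apply: measurable_funM
               | apply: measurable_funN | exact: measurable_cst | assumption].
rewrite /Rintegral; congr fine; apply: eq_integral => p _; congr EFin.
rewrite /wsub /Tw /Tf /= exprS -signr_odd.
by case: (odd n); rewrite /= ?expr1 ?expr0; ring.
Qed.
End P10.
Arguments Tf {R}. Arguments Tw {R}. Arguments sgn_sq {R}. Arguments TfK {R}. Arguments L2_rf {R}.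
Arguments wd_rf' {R}. Arguments H2_rf {R}. Arguments H2s_rf {R}. Arguments D2wit_rf {R}.
Arguments H2form_rf {R}.
Section P11.
Variable R : realType.
Local Notation rf := (@rf R).

Lemma f0 l (f : (R * R -> R) -> R) : dualC0 l f -> f (fun _ => 0) = 0.
Proof.
move=> [lin _].
have c0 : {within Omc l, continuous (fun _ : R * R => 0 : R)}.
  by apply: continuous_subspaceT; exact: cst_continuous.
have := lin (fun _ => 0) (fun _ => 0) 1 c0 c0.
rewrite (_ : (fun _ : R * R => 1 * 0 + 0) = (fun _ => 0)); last first.
  by apply/funext => p; rewrite mulr0 addr0.
rewrite mul1r => H; lra.
Qed.

Lemma fZ l (f : (R * R -> R) -> R) (u : R * R -> R) (a : R) : dualC0 l f -> {within Omc l, continuous u} ->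
  f (fun p => a * u p) = a * f u.
Proof.
move=> hf cu.
have c0 : {within Omc l, continuous (fun _ : R * R => 0 : R)}.
  by apply: continuous_subspaceT; exact: cst_continuous.
have := hf.1 u (fun _ => 0) a cu c0.
rewrite (f0 _ _ hf) addr0 => <-.
by congr f; apply/funext => p; rewrite addr0.
Qed.

Lemma f_odd l (f : (R * R -> R) -> R) (h : R * R -> R) : dualC0 l f -> fodd_zero l f ->
  {within Omc l, continuous h} -> f (Tf 0 h) = f h.
Proof.
move=> hf fo ch.
have E : oddp h = (fun p => 2^-1 * h p + (fun q => (- 2^-1) * h (rf q)) p).
  by apply/funext => p; rewrite /oddp /rf /=; field.
have c2 : {within Omc l, continuous (fun q => (- 2^-1) * h (rf q))} by exact: within_crf.
have := fo h ch; rewrite E (hf.1 _ _ _ ch c2) (fZ _ _ _ _ hf (within_rf _ _ ch)).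
have -> : Tf 0 h = (fun q => h (rf q)) by apply/funext => q; rewrite /Tf expr0 mul1r.
move=> H; apply/eqP; rewrite -subr_eq0; apply/eqP.
have : 2^-1 * (f (fun q => h (rf q)) - f h) = 0 :> R.
  by rewrite -[RHS]oppr0 -H; ring.
by move/eqP; rewrite mulf_eq0 invr_eq0 pnatr_eq0 /= => /eqP.
Qed.

Lemma f_even l (f : (R * R -> R) -> R) (h : R * R -> R) : dualC0 l f -> feven_zero l f ->
  {within Omc l, continuous h} -> f (Tf 1 h) = f h.
Proof.
move=> hf fe ch.
have E : evenp h = (fun p => 2^-1 * h p + (fun q => 2^-1 * h (rf q)) p).
  by apply/funext => p; rewrite /evenp /rf /=; field.
have c2 : {within Omc l, continuous (fun q => 2^-1 * h (rf q))} by exact: within_crf.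
have := fe h ch; rewrite E (hf.1 _ _ _ ch c2) (fZ _ _ _ _ hf (within_rf _ _ ch)).
have -> : Tf 1 h = (fun q => (-1) * h (rf q)) by apply/funext => q; rewrite /Tf expr1.
rewrite (fZ _ _ _ _ hf (within_rf _ _ ch)).
move=> H.
have : 2^-1 * (f h + f (fun q => h (rf q))) = 0 :> R by rewrite -H; ring.
move/eqP; rewrite mulf_eq0 invr_eq0 pnatr_eq0 /= addr_eq0 => /eqP ->.
by rewrite mulN1r.
Qed.
End P11.
Arguments f0 {R}. Arguments fZ {R}. Arguments f_odd {R}. Arguments f_even {R}.
Section P12.
Variable R : realType.
Local Notation rf := (@rf R).

Lemma main_sym (l sigma : R) (OmO : set (R * R)) (f : (R * R -> R) -> R)
    (psim psip u : R * R -> R) (n : nat) :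
  (forall v : R * R -> R, (forall p, OmO p -> psim p <= v p <= psip p) ->
     forall p, OmO p -> psim p <= Tf n v p <= psip p) ->
  (forall h, {within Omc l, continuous h} -> f (Tf n h) = f h) ->
  is_u_f l sigma OmO f psim psip u -> forall p, Omc l p -> Tf n u p = u p.
Proof.
move=> Hc Hf [[[Hu Bu] VI] Uq].
apply: Uq; split.
  split; [exact: H2s_rf | exact: Hc].
move=> wu Dwu phi [Hphi Bphi] wphi Dphi.
have L2u : L2 l (Tf n u) := (H2s_rf l u n Hu).1.2.1.
have Dwu' : D2wit l u (Tw n wu).
  by have := D2wit_rf l (Tf n u) wu n L2u Dwu; rewrite TfK.
have Kphi' : Kset l OmO psim psip (Tf n phi).
  split; [exact: H2s_rf | exact: Hc].
have Dphi' := D2wit_rf l phi wphi n Hphi.1.2.1 Dphi.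
have := VI (Tw n wu) Dwu' (Tf n phi) Kphi' (Tw n wphi) Dphi'.
have [L11 [L12 [L22 _]]] := Dwu.
have [M11 [M12 [M22 _]]] := Dphi.
rewrite (H2form_rf l sigma n wu wphi L11 L12 L22 M11 M12 M22).
have -> : (fun p => Tf n phi p - u p) = Tf n (fun p => phi p - Tf n u p).
  apply/funext => p; rewrite /Tf rfK mulrBr mulrA sgn_sq mul1r //.
rewrite Hf //.
have cT : {within Omc l, continuous (Tf n u)}.
  exact (within_crf l u ((-1) ^+ n) Hu.1.1).
have -> : (fun p => phi p - Tf n u p) = (fun p => -1 * Tf n u p + phi p).
  by apply/funext => p; rewrite mulN1r addrC.
exact: (within_lin _ _ _ (-1) cT Hphi.1.1).
Qed.
End P12.
Arguments main_sym {R}.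

Theorem lemma4p4 (R : realType) (l sigma : R) (OmO : set (R * R))
    (f : (R * R -> R) -> R) (gm gp : R) (psim psip u : R * R -> R) :
  0 < l -> 0 < sigma < 1 ->
  OmO !=set0 -> closed OmO -> OmO `<=` Omc l ->
  (forall p : R * R, OmO p <-> OmO (p.1, - p.2)) ->
  dualC0 l f -> 0 < gm -> 0 < gp ->
  Ominus OmO gm psim -> Oplus OmO gp psip ->
  is_u_f l sigma OmO f psim psip u ->
  ((even_on OmO psim -> even_on OmO psip -> fodd_zero l f ->
      forall p, Omc l p -> oddp u p = 0) /\
   ((forall p, OmO p -> psim p = - psip p) -> even_on OmO psim -> feven_zero l f ->
      forall p, Omc l p -> evenp u p = 0)).
Proof.
move=> l0 s01 ne cl sub sym hf gm0 gp0 Hm Hp Hu; split.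
  move=> em ep fo p Op.
  have Hc : forall v : R * R -> R, (forall q, OmO q -> psim q <= v q <= psip q) ->
      forall q, OmO q -> psim q <= Tf 0 v q <= psip q.
    move=> v Hv q Oq; rewrite /Tf expr0 mul1r.
    have Oq' := (sym q).1 Oq.
    by have := Hv _ Oq'; rewrite (em q Oq) (ep q Oq).
  have Hf : forall h, {within Omc l, continuous h} -> f (Tf 0 h) = f h.
    move=> h ch; exact: (f_odd l f h hf fo ch).
  have := main_sym l sigma OmO f psim psip u 0%N Hc Hf Hu p Op.
  rewrite /Tf /oddp expr0 mul1r /rf => ->.
  by rewrite subrr mul0r.
move=> mp em fe p Op.
have Hc : forall v : R * R -> R, (forall q, OmO q -> psim q <= v q <= psip q) ->
    forall q, OmO q -> psim q <= Tf 1 v q <= psip q.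
  move=> v Hv q Oq; rewrite /Tf expr1 mulN1r.
  have Oq' := (sym q).1 Oq.
  have /andP[h1 h2] := Hv _ Oq'.
  have e1 := em q Oq.
  have e2 := mp q Oq.
  have e3 := mp _ Oq'.
  rewrite /rf; apply/andP; split; lra.
have Hf : forall h, {within Omc l, continuous h} -> f (Tf 1 h) = f h.
  move=> h ch; exact: (f_even l f h hf fe ch).
have := main_sym l sigma OmO f psim psip u 1%N Hc Hf Hu p Op.
rewrite /Tf /evenp expr1 /rf mulN1r => <-.
by rewrite addNr mul0r.
Qed.
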